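(* Let $M$ be an $n\times n$ non-singular, aperiodic, odd-block matrix with nonnegative integer entries, and let $h$ be any piecewise-linear map realizing $M$. Then there exists an aperiodic odd-block matrix $N$ with entries only in $\{0,1\}$ such that $h$ is a piecewise-linear map realizing $N$ (i.e. $h_N=h_M=h$), and the leading eigenvalue of $N$ equals the leading eigenvalue of $M$.
   Context: An $m\times m$ nonnegative integer matrix $A$ is odd-block if (i) in each column of $A$ the non-zero entries form one consecutive block, and (ii) there is a map $\phi:\{0,1,\dots,m\}\to\{0,1,\dots,m\}$ such that $A_{ij}$ is odd if and only if $\min\{\phi(j-1),\phi(j)\}<i\le\max\{\phi(j-1),\phi(j)\}$. A nonnegative matrix is aperiodic if some power of it has all entries positive. For an aperiodic nonnegative integer $m\times m$ matrix $A$ with leading (Perron) eigenvalue $\lambda$, let $v$ be the positive eigenvector of $A^T$ for $\lambda$ normalized to have $L^1$-norm $1$, set $x_0=0$ and $x_i=x_{i-1}+v_i$ (so $x_m=1$), and $I_i=[x_{i-1},x_i]$. A piecewise-linear map realizing $A$ (denoted $h_A$) is a continuous map $h:[0,1]\to[0,1]$ such that for each $j$ there is a subdivision $x_{j-1}=a_0<a_1<\dots<a_r=x_j$ with $h$ affine of slope $\pm\lambda$ on each $[a_{k-1},a_k]$ and mapping it onto some interval $I_i$, and for every $i$ the number of $k$ with $h([a_{k-1},a_k])=I_i$ equals $A_{ij}$. Such a map need not be unique when $A$ has entries larger than $1$. *)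

(* Defs.v *)
From HB Require Import structures.
From mathcomp Require Import all_boot all_order all_algebra.
From mathcomp Require Import all_classical all_reals all_analysis.
From mathcomp Require Import complex.

Set Implicit Arguments.
Unset Strict Implicit.
Unset Printing Implicit Defensive.

Import Order.TTheory GRing.Theory Num.Theory.
Import numFieldNormedType.Exports.
Local Open Scope ring_scope.
Local Open Scope classical_set_scope.

(* Matrices with nonnegative integer entries are 'M[nat]_m.
   Paper indices 1..m correspond to 0-based ordinals 0..m-1. *)

(* Odd-block matrix. (i) in each column the non-zero entries form one
   consecutive block; (ii) there is phi : {0..m} -> {0..m} such that
   A_ij is odd iff min(phi(j-1),phi(j)) < i <= max(phi(j-1),phi(j))
   (1-based i, j; here i, j are 0-based, so paper i = i.+1, paper j = j.+1). *)
Definition odd_block (m : nat) (A : 'M[nat]_m) : Prop :=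
  (forall (j i1 i i2 : 'I_m), (i1 <= i <= i2)%N ->
      A i1 j != 0%N -> A i2 j != 0%N -> A i j != 0%N) /\
  exists phi : 'I_m.+1 -> 'I_m.+1, forall (i j : 'I_m),
    odd (A i j) =
    (minn (phi (inord j)) (phi (inord j.+1)) < i.+1
       <= maxn (phi (inord j)) (phi (inord j.+1)))%N.

Definition aperiodic (m : nat) (A : 'M[nat]_m) : Prop :=
  exists k : nat, forall i j : 'I_m, (0 < (A ^+ k) i j)%N.

Definition nonsingular (m : nat) (A : 'M[nat]_m) : Prop :=
  \det (map_mx (fun a : nat => a%:Z) A) != 0.

Definition leading_eigenvalue (R : realType) (m : nat) (A : 'M[nat]_m)
    (lam : R) : Prop :=
  eigenvalue (map_mx (fun a : nat => (a%:R : R[i])) A) (lam%:C)%C /\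
  forall mu : R[i], eigenvalue (map_mx (fun a : nat => (a%:R : R[i])) A) mu ->
    `|mu| <= (lam%:C)%C.

(* h is a piecewise-linear map realizing A.  v is the positive eigenvector
   of A^T for lam (a row vector with v *m A = lam v), L^1-normalized;
   x k = v_1 + ... + v_k (so x 0 = 0, x m = 1), and the 0-based interval
   I_i is [x i, x i.+1]. *)
Definition realizes (R : realType) (m : nat) (A : 'M[nat]_m) (h : R -> R)
    : Prop :=
  exists (lam : R) (v : 'rV[R]_m),
    leading_eigenvalue A lam /\
    (forall i : 'I_m, 0 < v 0 i) /\
    v *m map_mx (fun a : nat => (a%:R : R)) A = lam *: v /\
    \sum_(i < m) v 0 i = 1 /\
    {within `[0%R, 1%R], continuous h} /\
    (forall t : R, 0 <= t <= 1 -> 0 <= h t <= 1) /\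
    let x := fun k : nat => \sum_(i < m | (i < k)%N) v 0 i in
    forall j : 'I_m,
      exists (r : nat) (a : nat -> R) (tgt : 'I_r -> 'I_m),
        a 0%N = x j /\ a r = x j.+1 /\
        (forall k : nat, (k < r)%N -> a k < a k.+1) /\
        (forall k : 'I_r, exists s c : R,
            (s = lam \/ s = - lam) /\
            (forall t : R, a k <= t <= a k.+1 -> h t = s * t + c) /\
            h @` `[a k, a k.+1] = `[x (tgt k), x (tgt k).+1]) /\
        (forall i : 'I_m, #|[pred k : 'I_r | tgt k == i]| = A i j).

(* Main.v *)
Require Import Defs.
From HB Require Import structures.
From mathcomp Require Import all_boot all_order all_algebra.
From mathcomp Require Import all_classical all_reals all_analysis.
From mathcomp Require Import complex.
From mathcomp Require Import ring lra zify.
Set Implicit Arguments.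
Unset Strict Implicit.
Unset Printing Implicit Defensive.
Import Order.TTheory GRing.Theory Num.Theory.
Import numFieldNormedType.Exports.
Local Open Scope ring_scope.
Local Open Scope classical_set_scope.

Section Aff.
Variable R : realType.

Lemma aff_img (h : R -> R) (al be s c : R) : al <= be -> s != 0 ->
  (forall t, al <= t <= be -> h t = s * t + c) ->
  h @` `[al, be] = `[Num.min (h al) (h be), Num.max (h al) (h be)].
Proof.
move=> lab s0 Hh.
have ha : h al = s * al + c by apply: Hh; rewrite lexx lab.
have hb : h be = s * be + c by apply: Hh; rewrite lexx lab.
rewrite ha hb.
have [u [w [Hm [HM [Hu Hw]]]]] : exists u w, Num.min (s * al + c) (s * be + c) = u /\
   Num.max (s * al + c) (s * be + c) = w /\ 
   (forall z, al <= z <= be -> u <= s * z + c <= w) /\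
   (forall z, u <= s * z + c <= w -> al <= z <= be).
  case: (ltrgtP s 0) s0 => // hs _.
  - have Hle : s * be + c <= s * al + c by nra.
    exists (s * be + c), (s * al + c); rewrite (min_idPr Hle) (max_idPl Hle).
    split; first done; split; first done; split.
    + by move=> z /andP[? ?]; apply/andP; split; nra.
    + by move=> z /andP[? ?]; apply/andP; split; nra.
  - have Hle : s * al + c <= s * be + c by nra.
    exists (s * al + c), (s * be + c); rewrite (min_idPl Hle) (max_idPr Hle).
    split; first done; split; first done; split.
    + by move=> z /andP[? ?]; apply/andP; split; nra.
    + by move=> z /andP[? ?]; apply/andP; split; nra.
rewrite Hm HM.
apply/seteqP; split.
- move=> y [t] /=; rewrite in_itv /= => Ht <-.
  by rewrite in_itv /= (Hh t Ht) Hu.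
- move=> y /=; rewrite in_itv /= => Hy.
  have hz : s * ((y - c) / s) + c = y by field.
  have Hz : al <= (y - c) / s <= be by apply: Hw; rewrite hz.
  exists ((y - c) / s); first by rewrite /= in_itv.
  by rewrite Hh.
Qed.

Lemma itv_set_eq (p q u w : R) : p <= q ->
  (`[p, q] : set R) = `[u, w] -> p = u /\ q = w.
Proof.
move=> pq E.
have memE : forall a b y : R, ((`[a, b] : set R) y) = (a <= y <= b).
  by move=> a b y; rewrite /= in_itv.
have Hp : u <= p <= w by rewrite -memE -E memE lexx pq.
have Hq : u <= q <= w by rewrite -memE -E memE lexx pq.
move/andP: Hp => [H1 H2]; move/andP: Hq => [H3 H4].
have Hu : p <= u <= q by rewrite -memE E memE lexx (le_trans H1 H2).
have Hw : p <= w <= q by rewrite -memE E memE lexx (le_trans H1 H2).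
move/andP: Hu => [H5 H6]; move/andP: Hw => [H7 H8].
split; apply/eqP; rewrite eq_le; apply/andP; split => //.
Qed.

Lemma aff_ends (h : R -> R) (al be s c u w : R) : al < be -> s != 0 ->
  (forall t, al <= t <= be -> h t = s * t + c) ->
  h @` `[al, be] = `[u, w] ->
  (0 < s -> h al = u /\ h be = w) /\ (s < 0 -> h al = w /\ h be = u).
Proof.
move=> lab s0 Hh E.
have E' := aff_img (ltW lab) s0 Hh; rewrite E in E'.
have := @itv_set_eq (Num.min (h al) (h be)) (Num.max (h al) (h be)) u w _ (esym E').
have HH : Num.min (h al) (h be) <= Num.max (h al) (h be) by rewrite ge_min !le_max !lexx.
move=> /(_ HH) [E1 E2].
have ha : h al = s * al + c by apply: Hh; rewrite lexx ltW.
have hb : h be = s * be + c by apply: Hh; rewrite lexx ltW.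
split => hs.
- have Hle : h al <= h be by rewrite ha hb; nra.
  by move: E1 E2; rewrite (min_idPl Hle) (max_idPr Hle).
- have Hle : h be <= h al by rewrite ha hb; nra.
  by move: E1 E2; rewrite (min_idPr Hle) (max_idPl Hle).
Qed.


Lemma piece_sub (h : R -> R) (al be s c : R) (r0 : nat) (e : nat -> R) (neg : bool) :
  al <= be ->
  (forall m, (m < r0)%N -> e m < e m.+1) -> (if neg then s < 0 else 0 < s) ->
  (forall t, al <= t <= be -> h t = s * t + c) ->
  h al = e (if neg then r0 else 0%N) -> h be = e (if neg then 0%N else r0) ->
  exists a' : nat -> R, a' 0%N = al /\ a' r0 = be /\
   (forall m, (m < r0)%N -> a' m < a' m.+1) /\
   forall m : 'I_r0, (forall t, a' m <= t <= a' m.+1 -> h t = s * t + c) /\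
      h @` `[a' m, a' m.+1] =
        `[e (if neg then r0 - m.+1 else m)%N, e (if neg then r0 - m.+1 else m)%N.+1].
Proof.
move=> lab He Hs Hh Hal Hbe.
have s0 : s != 0 by case: neg Hs {Hal Hbe} => H; [rewrite ltr0_neq0 | rewrite lt0r_neq0].
have [idx Hidx] : {idx : nat -> nat | forall m, idx m = if neg then (r0 - m)%N else m}.
  by exists (fun m => if neg then (r0 - m)%N else m).
pose a' m := (e (idx m) - c) / s.
have ha' : forall m, s * a' m + c = e (idx m) by move=> m; rewrite /a'; field.
have hal : h al = s * al + c by apply: Hh; rewrite lexx lab.
have hbe : h be = s * be + c by apply: Hh; rewrite lexx lab.
have Hinc : forall m, (m < r0)%N -> a' m < a' m.+1.
  move=> m mr; have h1 := ha' m; have h2 := ha' m.+1; move: h1 h2.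
  rewrite !Hidx; case: neg Hs {Hal Hbe Hidx} => Hs h1 h2.
  - move: h1; rewrite -(subnSK mr) => h1.
    have : (r0 - m.+1 < r0)%N by lia.
    move=> /He; rewrite -h1 -h2 => H; nra.
  - have := He _ mr; rewrite -h1 -h2 => H; nra.
have Hmono : forall i j, (i <= j <= r0)%N -> a' i <= a' j.
  move=> i j /andP[]; elim: j => [|j IH]; first by rewrite leqn0 => /eqP ->.
  rewrite leq_eqVlt => /orP[/eqP -> // | ij] jr.
  apply: le_trans (IH ij (ltnW jr)) (ltW (Hinc _ jr)).
have a0 : a' 0%N = al.
  apply: (mulfI s0); apply: (addIr c); rewrite ha' -hal Hal !Hidx.
  by case: neg {Hs Hbe Hal Hinc Hmono Hidx} => //; rewrite subn0.
have ar : a' r0 = be.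
  apply: (mulfI s0); apply: (addIr c); rewrite ha' -hbe Hbe !Hidx.
  by case: neg {Hs Hal Hbe Hinc Hmono Hidx a0} => //; rewrite subnn.
exists a'; split => //; split => //; split => // m.
have Haff : forall t, a' m <= t <= a' m.+1 -> h t = s * t + c.
  move=> t /andP[t1 t2]; apply: Hh; rewrite -a0 -ar.
  rewrite (le_trans _ t1) ?(le_trans t2) //; apply: Hmono; apply/andP; split => //; exact: ltnW.

split => //.
have hm : h (a' m) = e (idx m) by rewrite -ha' Haff // lexx ltW ?Hinc.
have hm1 : h (a' m.+1) = e (idx m.+1) by rewrite -ha' Haff // lexx ltW ?Hinc.
rewrite (aff_img (ltW (Hinc _ (ltn_ord m))) s0 Haff) hm hm1 !Hidx.
case: neg Hs {Hal Hbe hm hm1 a0 ar Hinc Hmono Haff Hidx} => Hs.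
- rewrite -(subnSK (ltn_ord m)).
  have : (r0 - m.+1 < r0)%N by have := ltn_ord m; lia.
  move=> /He /ltW Hle.
  by rewrite (min_idPr Hle) (max_idPl Hle).
- have Hle := ltW (He _ (ltn_ord m)).
  by rewrite (min_idPl Hle) (max_idPr Hle).
Qed.

End Aff.

Section Main.
Variables (R : realType) (n : nat) (M : 'M[nat]_n.+1) (h : R -> R) (lam : R)
  (v : 'rV[R]_n.+1).
Variables (r : 'I_n.+1 -> nat) (a : 'I_n.+1 -> nat -> R)
  (tgt : forall j : 'I_n.+1, 'I_(r j) -> 'I_n.+1).
Let x := fun k : nat => \sum_(i < n.+1 | (i < k)%N) v 0 i.
Hypothesis Hv : forall i, 0 < v 0 i.
Hypothesis Hsum : \sum_(i < n.+1) v 0 i = 1.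
Hypothesis Ha0 : forall j, a j 0%N = x j.
Hypothesis Har : forall j, a j (r j) = x j.+1.
Hypothesis Hinc : forall j k, (k < r j)%N -> a j k < a j k.+1.

Definition rn (i : nat) : nat := if (i < n.+1)%N then r (inord i) else 0%N.
Definition S (m : nat) : nat := \sum_(i < m) rn i.
Definition kk := S n.+1.
Definition col (g : nat) : 'I_n.+1 :=
  odflt ord0 [pick j : 'I_n.+1 | (S j <= g < S j.+1)%N].
Definition loc (g : nat) : nat := (g - S (col g))%N.
Definition b (g : nat) : R := if (g < kk)%N then a (col g) (loc g) else 1.
Definition tg (j : 'I_n.+1) (m : nat) : 'I_n.+1 := oapp (@tgt j) ord0 (insub m).
Definition tgtN (p : nat) : 'I_n.+1 := tg (col p) (loc p).

Lemma rnE (j : 'I_n.+1) : rn j = r j.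
Proof. by rewrite /rn ltn_ord inord_val. Qed.

Lemma S_S m : S m.+1 = (S m + rn m)%N.
Proof. by rewrite /S big_ord_recr. Qed.

Lemma S0 : S 0 = 0%N.
Proof. by rewrite /S big_ord0. Qed.

Lemma S_mono m1 m2 : (m1 <= m2)%N -> (S m1 <= S m2)%N.
Proof.
move=> /subnK <-; elim: (m2 - m1)%N => [|d IH] //.
by rewrite addSn S_S (leq_trans IH) // leq_addr.
Qed.

Lemma SjS (j : 'I_n.+1) : S j.+1 = (S j + r j)%N.
Proof. by rewrite S_S rnE. Qed.

Lemma xS (j : 'I_n.+1) : x j.+1 = x j + v 0 j.
Proof.
rewrite /x (bigD1 j) //=.
rewrite addrC; congr (_ + _).
apply: eq_bigl => i; rewrite ltnS leq_eqVlt; case: (i =P j) => [->|/eqP ij] /=.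
  by rewrite andbF ltnn.
by rewrite andbT; move: ij; rewrite -val_eqE => /negbTE ->.
Qed.

Lemma xn : x n.+1 = 1.
Proof. by rewrite /x -Hsum; apply: eq_bigl => i; rewrite ltn_ord. Qed.

Lemma x0 : x 0 = 0.
Proof. by rewrite /x big1. Qed.

Lemma rpos j : (0 < r j)%N.
Proof.
rewrite lt0n; apply/negP => /eqP rj.
have := Har j; rewrite rj Ha0 xS => E.
have := Hv j; lra.
Qed.

Lemma SjS_le (j : 'I_n.+1) : (S j.+1 <= kk)%N.
Proof. by apply: S_mono. Qed.

Lemma col_uniq (j j' : 'I_n.+1) g : (S j <= g < S j.+1)%N ->
  (S j' <= g < S j'.+1)%N -> j = j'.
Proof.
move=> /andP[h1 h2] /andP[h3 h4]; apply: val_inj => /=.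
case: (ltngtP j j') => // jj.
- have := S_mono jj; lia.
- have := S_mono jj; lia.
Qed.

Lemma col_spec (j : 'I_n.+1) g : (S j <= g < S j.+1)%N -> col g = j.
Proof.
move=> Hg; rewrite /col; case: pickP => [j' Hj' | H] /=.
  exact: col_uniq Hj' Hg.
by have := H j; rewrite Hg.
Qed.

Lemma col_ex_gen g m : (m <= n.+1)%N -> (g < S m)%N ->
  exists j : 'I_n.+1, (S j <= g < S j.+1)%N.
Proof.
elim: m => [|m IH] mn; first by rewrite S0.
case: (ltnP g (S m)) => gm gS; first exact: IH (ltnW mn) gm.
by exists (Ordinal mn); rewrite /= gm gS.
Qed.

Lemma col_ex g : (g < kk)%N -> exists j : 'I_n.+1, (S j <= g < S j.+1)%N.
Proof. exact: col_ex_gen. Qed.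

Lemma col_in g : (g < kk)%N -> (S (col g) <= g < S (col g).+1)%N.
Proof. by move=> /col_ex [j Hj]; rewrite (col_spec Hj). Qed.

Lemma colSm (j : 'I_n.+1) m : (m < r j)%N -> col (S j + m) = j.
Proof. by move=> mr; apply: col_spec; rewrite SjS leq_addr ltn_add2l. Qed.

Lemma colE (q : nat) (j : 'I_n.+1) : (q < kk)%N -> (col q == j) = (S j <= q < S j.+1)%N.
Proof.
move=> qk; apply/eqP/idP => [<-|]; first exact: col_in.
exact: col_spec.
Qed.

Lemma tgtNE (j : 'I_n.+1) (m : 'I_(r j)) : tgtN (S j + m) = @tgt j m.
Proof.
rewrite /tgtN /loc colSm // addKn /tg.
by rewrite (valK m).
Qed.

Lemma tgtNE' p (mr : (loc p < r (col p))%N) : tgtN p = @tgt (col p) (Ordinal mr).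
Proof.
rewrite /tgtN /tg; case: insubP => [u _ uE | ]; last by rewrite mr.
by congr (@tgt _ _); apply: val_inj; rewrite /= uE.
Qed.

Lemma b_at (j : 'I_n.+1) m : (m <= r j)%N -> b (S j + m) = a j m.
Proof.
rewrite leq_eqVlt => /orP[/eqP -> | mr].
- rewrite -SjS; case: (ltnP j.+1 n.+1) => jn.
  + have := rpos (Ordinal jn) => r0.
    have E : S j.+1 = (S (Ordinal jn) + 0)%N by rewrite addn0.
    rewrite E /b.
    have H0 : (S (Ordinal jn) + 0 < kk)%N.
      by apply: leq_trans (SjS_le (Ordinal jn)); rewrite addn0 SjS /= -{1}(addn0 (S j.+1)) ltn_add2l.
    rewrite H0 /loc colSm // addKn Ha0 Har //.
  + have E : j.+1 = n.+1 by apply/eqP; rewrite eqn_leq jn ltn_ord.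
    by rewrite /b E ltnn Har E xn.
- rewrite /b /loc colSm // addKn.
  suff -> : (S j + m < kk)%N by [].
  by apply: leq_trans (SjS_le j); rewrite SjS ltn_add2l.
Qed.


Lemma b0 : b 0 = 0.
Proof. by have := b_at (j:=ord0) (leq0n _); rewrite /= S0 addn0 Ha0 x0. Qed.

Lemma bk : b kk = 1.
Proof. by rewrite /b ltnn. Qed.

Lemma b_lt g : (g < kk)%N -> b g < b g.+1.
Proof.
move=> gk; have /andP[h1 h2] := col_in gk.
move: (col g) h1 h2 => j h1 h2.
have [m [E mr]] : exists m, g = (S j + m)%N /\ (m < r j)%N.
  by exists (g - S j)%N; split; [rewrite subnKC | move: h2; rewrite SjS; lia].
rewrite E -addnS !b_at ?(ltnW mr) //; exact: Hinc.
Qed.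

Lemma b_ltT g1 g2 : (g1 < g2 <= kk)%N -> b g1 < b g2.
Proof.
move=> /andP[]; elim: g2 => // g2 IH; rewrite ltnS leq_eqVlt => /orP[/eqP -> | lt] gk.
  exact: b_lt.
apply: lt_trans (IH lt (ltnW gk)) (b_lt gk).
Qed.

Lemma b_le g1 g2 : (g1 <= g2 <= kk)%N -> b g1 <= b g2.
Proof.
move=> /andP[]; rewrite leq_eqVlt => /orP[/eqP -> // | lt] gk.
by apply: ltW; apply: b_ltT; rewrite lt gk.
Qed.

Lemma b_inj g1 g2 : (g1 <= kk)%N -> (g2 <= kk)%N -> b g1 = b g2 -> g1 = g2.
Proof.
move=> h1 h2 E; case: (ltngtP g1 g2) => // lt.
- by have := b_ltT (g1:=g1) (g2:=g2); rewrite lt h2 E ltxx => /(_ isT).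
- by have := b_ltT (g1:=g2) (g2:=g1); rewrite lt h1 E ltxx => /(_ isT).
Qed.

Lemma bSx (j : 'I_n.+1) : b (S j) = x j.
Proof. by rewrite -[S j]addn0 b_at // Ha0. Qed.

Lemma bSx1 (j : 'I_n.+1) : b (S j.+1) = x j.+1.
Proof. by rewrite SjS b_at // Har. Qed.

Lemma sum_col (V : nmodType) (F : nat -> V) (j : 'I_n.+1) :
  \sum_(p < kk | col p == j) F p = \sum_(m < r j) F (S j + m)%N.
Proof.
rewrite big_mkcond /= -(big_mkord xpredT (fun p => if col p == j then F p else 0)).
have Hj : (S j <= kk)%N by apply: leq_trans (SjS_le j); rewrite SjS leq_addr.
rewrite (big_cat_nat (leq0n (S j)) Hj) /=.
rewrite (@big_cat_nat _ _ _ (S j.+1) (S j) kk _ _ _ (SjS_le j)) /=; last by rewrite SjS leq_addr.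
have Z1 : \sum_(0 <= p < S j) (if col p == j then F p else 0) = 0.
  rewrite big_nat_cond big1 // => p /andP[/andP[_ pS] _].
  by rewrite colE ?(leq_trans pS Hj) // leqNgt pS.
have Z3 : \sum_(S j.+1 <= p < kk) (if col p == j then F p else 0) = 0.
  rewrite big_nat_cond big1 // => p /andP[/andP[Sp pk] _].
  by rewrite colE // ltnNge Sp andbF.
rewrite Z1 Z3 add0r addr0 big_nat_cond.
rewrite (eq_bigr (fun p => F p)); last first.
  move=> p /andP[Hp _]; rewrite colE ?Hp //.
  by move/andP: Hp => [_ /leq_trans]; apply; apply: SjS_le.
rewrite -big_nat_cond -{1}(add0n (S j)) big_addn SjS addKn big_mkord.
by apply: eq_bigr => m _; rewrite addnC.
Qed.

Lemma sum_colN (F : nat -> nat) (j : 'I_n.+1) :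
  (\sum_(p < kk | col p == j) F p = \sum_(m < r j) F (S j + m))%N.
Proof. exact: (sum_col (V := nat)). Qed.


Hypothesis Hlam : 0 < lam.
Hypothesis Hpiece : forall j (m : 'I_(r j)), exists s c : R,
  (s = lam \/ s = - lam) /\ (forall t, a j m <= t <= a j m.+1 -> h t = s * t + c) /\
  h @` `[a j m, a j m.+1] = `[x (@tgt j m), x (@tgt j m).+1].

Lemma piece p : (p < kk)%N -> exists s c : R, (s = lam \/ s = - lam) /\
  (forall u, b p <= u <= b p.+1 -> h u = s * u + c) /\
  (s = lam -> h (b p) = b (S (tgtN p)) /\ h (b p.+1) = b (S (tgtN p).+1)) /\
  (s = - lam -> h (b p) = b (S (tgtN p).+1) /\ h (b p.+1) = b (S (tgtN p))).
Proof.
move=> pk; have /andP[h1 h2] := col_in pk.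
have mr : (loc p < r (col p))%N by rewrite /loc; move: h2; rewrite SjS; lia.
rewrite (tgtNE' mr).
have E : p = (S (col p) + loc p)%N by rewrite /loc subnKC.
have bp : b p = a (col p) (loc p) by rewrite {1}E b_at // ltnW.
have bp1 : b p.+1 = a (col p) (loc p).+1 by rewrite {1}E -addnS b_at.
have [s [c [Hs [Hh Himg]]]] := Hpiece (Ordinal mr).
have s0 : s != 0 by case: Hs => ->; rewrite ?oppr_eq0 lt0r_neq0.
exists s, c; split => //; rewrite bp bp1; split => //.
have [Hp Hn] := aff_ends (Hinc mr) s0 Hh Himg.
rewrite !bSx !bSx1; split => Es.
- by apply: Hp; rewrite Es.
- by apply: Hn; rewrite Es oppr_lt0.
Qed.


Definition Nm : 'M[nat]_kk := \matrix_(q < kk, p < kk) ((col q == tgtN p) : nat).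
Definition Bm : 'M[nat]_(kk, n.+1) := \matrix_(q < kk, i < n.+1) ((col q == i) : nat).
Definition Cm : 'M[nat]_(n.+1, kk) := \matrix_(i < n.+1, p < kk) ((tgtN p == i) : nat).

Hypothesis Hcount : forall j i, #|[pred m : 'I_(r j) | @tgt j m == i]| = M i j.

Lemma N_BC : Nm = Bm *m Cm.
Proof.
apply/matrixP => q p; rewrite !mxE (bigD1 (col q)) //= !mxE eqxx mul1r.
rewrite big1 ?addr0 => [|i /negbTE ni]; first by rewrite eq_sym.
by rewrite !mxE eq_sym ni.
Qed.

Lemma M_CB : Cm *m Bm = M.
Proof.
apply/matrixP => i j; rewrite !mxE -Hcount.
rewrite (eq_bigr (fun p : 'I_kk => if col p == j then (tgtN p == i : nat) else 0%N)); last first.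
  move=> p _; rewrite !mxE; case: (col p == j); rewrite /= ?mulr1 ?mulr0 //.
rewrite -big_mkcond /=.
transitivity (\sum_(m < r j) (tgtN (S j + m) == i : nat)).
  exact: (sum_col (V:=nat) (fun p => (tgtN p == i : nat)) j).
transitivity (\sum_(m < r j) (tgtN (S j + m) == i : nat))%N; first by [].
rewrite -sum1_card.
rewrite [RHS]big_mkcond /=.
by apply: eq_bigr => m _; rewrite tgtNE inE; case: ifP.
Qed.


Lemma mapN_mul (T : pzSemiRingType) p q s (X : 'M[nat]_(p, q)) (Y : 'M[nat]_(q, s)) :
  map_mx (fun a : nat => (a%:R : T)) (X *m Y) =
  map_mx (fun a : nat => (a%:R : T)) X *m map_mx (fun a : nat => (a%:R : T)) Y.
Proof.
apply/matrixP => i j; rewrite !mxE natr_sum; apply: eq_bigr => l _.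
by rewrite !mxE natrM.
Qed.

Hypothesis Hap : aperiodic M.

Lemma apN : aperiodic Nm.
Proof.
have [K HK] := Hap; exists K.+1 => q p.
have pow : forall K, Nm ^+ K.+1 = Bm *m (Cm *m Bm) ^+ K *m Cm.
  elim => [|K' IH]; first by rewrite expr1 expr0 mulmx1 N_BC.
  rewrite exprS IH -mulmxE N_BC [(Cm *m Bm) ^+ K'.+1]exprS -mulmxE !mulmxA.
  done.
rewrite pow M_CB !mxE (bigD1 (tgtN p)) //= !mxE eqxx mulr1 (bigD1 (col q)) //=.
rewrite !mxE eqxx mul1r.
have := HK (col q) (tgtN p).
set u := (M ^+ K) _ _; set w1 := \sum_(_ < _ | _) _; set w2 := \sum_(_ < _ | _) _.
move=> Hu; apply: leq_trans Hu _.
by rewrite -addrA; apply: leq_addr.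
Qed.


Lemma eig_ne0 m (A : 'M[nat]_m) (mu : R[i]) : nonsingular A ->
  eigenvalue (map_mx (fun a : nat => (a%:R : R[i])) A) mu -> mu != 0.
Proof.
move=> Hns /eigenvalueP [u uM u0]; apply/negP => /eqP mu0.
move: uM; rewrite mu0 scale0r => uM.
have : \det (map_mx (fun a : nat => (a%:R : R[i])) A) == 0 by apply/det0P; exists u.
have -> : map_mx (fun a : nat => (a%:R : R[i])) A =
          map_mx intr (map_mx (fun a : nat => a%:Z) A).
  by apply/matrixP => i j; rewrite !mxE -pmulrn.
by rewrite det_map_mx /= intr_eq0; apply/negP.
Qed.

Lemma leadN (lam' : R) : nonsingular M -> leading_eigenvalue M lam' -> leading_eigenvalue Nm lam'.
Proof.
move=> Hns [HeM HbM].
set f := fun a : nat => (a%:R : R[i]).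
have Nc : map_mx f Nm = map_mx f Bm *m map_mx f Cm by rewrite N_BC mapN_mul.
have Mc : map_mx f M = map_mx f Cm *m map_mx f Bm by rewrite -M_CB mapN_mul.
have l0 := eig_ne0 Hns HeM.
split.
- move/eigenvalueP: HeM => [u uM u0]; apply/eigenvalueP; exists (u *m map_mx f Cm).
  + by rewrite Nc !mulmxA -(mulmxA u) -Mc uM scalemxAl.
  + apply/negP => /eqP w0.
    have : u *m map_mx f M = 0 by rewrite Mc mulmxA w0 mul0mx.
    by rewrite uM => /eqP; rewrite scaler_eq0 (negbTE l0) (negbTE u0).
- move=> mu /eigenvalueP [u uN u0]; case: (mu =P 0) => [->|/eqP mu0].
    by rewrite normr0; apply: le_trans (HbM _ HeM).
  apply: HbM; apply/eigenvalueP; exists (u *m map_mx f Bm).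
  + by rewrite Mc !mulmxA -(mulmxA u) -Nc uN scalemxAl.
  + apply/negP => /eqP w0.
    have : u *m map_mx f Nm = 0 by rewrite Nc mulmxA w0 mul0mx.
    by rewrite uN => /eqP; rewrite scaler_eq0 (negbTE mu0) (negbTE u0).
Qed.


Definition phiN (g : 'I_kk.+1) : 'I_kk.+1 :=
  odflt ord0 [pick y : 'I_kk.+1 | b y == h (b g)].

Lemma phiE (g : 'I_kk.+1) y : (y <= kk)%N -> b y = h (b g) -> nat_of_ord (phiN g) = y.
Proof.
move=> yk E; rewrite /phiN; case: pickP => [y' /eqP Hy' | H] /=.
  by apply: b_inj; [exact: (ltn_ord y') | exact: yk | rewrite Hy' E].
by have := H (Ordinal (yk : (y < kk.+1)%N)); rewrite /= E eqxx.
Qed.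

Lemma S_le_kk (j : 'I_n.+1) : (S j <= kk)%N.
Proof. by apply: leq_trans (SjS_le j); rewrite SjS leq_addr. Qed.


Lemma obN : odd_block Nm.
Proof.
split.
- move=> p i1 i i2 /andP[l1 l2]; rewrite !mxE !eqb0 !negbK.
  rewrite !colE // => /andP[a1 a2] /andP[a3 a4].
  by rewrite (leq_trans a1 l1) (leq_ltn_trans l2 a4).
exists phiN => q p; rewrite mxE.
have -> : odd (col q == tgtN p) = (col q == tgtN p) by case: (col q == tgtN p).
have [s [c [Hs [Hh [Hp Hn]]]]] := piece (ltn_ord p).
have pk1 : (p < kk.+1)%N by apply: ltnW; rewrite ltnS.
have pk2 : (p.+1 < kk.+1)%N by rewrite ltnS.
have Sle := S_mono (ltnW (ltnSn (tgtN p))).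
rewrite colE // SjS -ltnS -SjS.
case: Hs => Es.
- have [E1 E2] := Hp Es.
  have pi : nat_of_ord (inord p : 'I_kk.+1) = p by rewrite inordK.
  have pi1 : nat_of_ord (inord p.+1 : 'I_kk.+1) = p.+1 by rewrite inordK.
  rewrite (@phiE (inord p) (S (tgtN p))); [|exact: S_le_kk|by rewrite pi E1].
  rewrite (@phiE (inord p.+1) (S (tgtN p).+1)); [|exact: SjS_le|by rewrite pi1 E2].
  by rewrite (minn_idPl Sle) (maxn_idPr Sle).
- have [E1 E2] := Hn Es.
  have pi : nat_of_ord (inord p : 'I_kk.+1) = p by rewrite inordK.
  have pi1 : nat_of_ord (inord p.+1 : 'I_kk.+1) = p.+1 by rewrite inordK.
  rewrite (@phiE (inord p) (S (tgtN p).+1)); [|exact: SjS_le|by rewrite pi E1].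
  rewrite (@phiE (inord p.+1) (S (tgtN p))); [|exact: S_le_kk|by rewrite pi1 E2].
  by rewrite (minn_idPr Sle) (maxn_idPl Sle).
Qed.


Hypothesis Hns : nonsingular M.
Hypothesis Hlead : leading_eigenvalue M lam.
Hypothesis Hcont : {within `[0%R, 1%R], continuous h}.
Hypothesis Hrange : forall t : R, 0 <= t <= 1 -> 0 <= h t <= 1.

Definition vN : 'rV[R]_kk := \row_(q < kk) (b q.+1 - b q).

Lemma xN g : (g <= kk)%N -> \sum_(i < kk | (i < g)%N) vN 0 i = b g.
Proof.
move=> gk; transitivity (\sum_(i < g) (b i.+1 - b i)).
  symmetry; rewrite (big_ord_widen kk (fun i => b i.+1 - b i) gk).
  by apply: eq_bigr => i _; rewrite mxE.
by rewrite -(big_mkord xpredT (fun i => b i.+1 - b i)) telescope_sumr // b0 subr0.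
Qed.

Lemma vN_eig : vN *m map_mx (fun a : nat => (a%:R : R)) Nm = lam *: vN.
Proof.
apply/rowP => p; rewrite !mxE.
transitivity (\sum_(q < kk | col q == tgtN p) (b q.+1 - b q)).
  rewrite [RHS]big_mkcond /=; apply: eq_bigr => q _; rewrite !mxE.
  by case: (col q == tgtN p); rewrite ?mulr1 ?mulr0.
rewrite (sum_col (fun q => b q.+1 - b q)).
rewrite (eq_bigr (fun m : 'I_(r (tgtN p)) => b (S (tgtN p) + m.+1) - b (S (tgtN p) + m))); last first.
  by move=> m _; rewrite addnS.
rewrite -(big_mkord xpredT (fun m => b (S (tgtN p) + m.+1) - b (S (tgtN p) + m))).
rewrite (telescope_sumr (fun m => b (S (tgtN p) + m))) // addn0 -SjS.
have [s [c [Hs [Hh [Hp Hn]]]]] := piece (ltn_ord p).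
have bl := b_lt (ltn_ord p).
have e1 : h (b p) = s * b p + c by apply: Hh; rewrite lexx ltW.
have e2 : h (b p.+1) = s * b p.+1 + c by apply: Hh; rewrite lexx ltW.
case: Hs => Es; [have [E1 E2] := Hp Es | have [E1 E2] := Hn Es];
  rewrite -E1 -E2 e1 e2 Es; ring.
Qed.


Lemma realN : realizes Nm h.
Proof.
exists lam, vN.
split; first exact: leadN.
split; first by move=> q; rewrite mxE subr_gt0 b_lt.
split; first exact: vN_eig.
split.
  rewrite (eq_bigr (fun q : 'I_kk => b q.+1 - b q)) => [|q _]; last by rewrite mxE.
  by rewrite -(big_mkord xpredT (fun q => b q.+1 - b q)) telescope_sumr // bk b0 subr0.
split; first exact: Hcont.
split; first exact: Hrange.
move=> x' p.
have x'E : forall g, (g <= kk)%N -> x' g = b g by move=> g gk; rewrite /x' xN.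
have [s [c [Hs [Hh [Hp Hn]]]]] := piece (ltn_ord p).
set t := tgtN p.
have bl := b_lt (ltn_ord p).
have He : forall m, (m < r t)%N -> b (S t + m) < b (S t + m.+1).
  move=> m mr; rewrite addnS; apply: b_lt.
  by apply: leq_trans (SjS_le t); rewrite SjS ltn_add2l.
suff gen : forall neg : bool, (if neg then s < 0 else 0 < s) ->
    h (b p) = b (S t + (if neg then r t else 0%N)) ->
    h (b p.+1) = b (S t + (if neg then 0%N else r t)) ->
  exists (r0 : nat) (a0 : nat -> R) (tgt0 : 'I_r0 -> 'I_kk),
    a0 0%N = x' p /\ a0 r0 = x' p.+1 /\
    (forall k : nat, (k < r0)%N -> a0 k < a0 k.+1) /\
    (forall k : 'I_r0, exists s0 c0 : R,
        (s0 = lam \/ s0 = - lam) /\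
        (forall t0 : R, a0 k <= t0 <= a0 k.+1 -> h t0 = s0 * t0 + c0) /\
        h @` `[a0 k, a0 k.+1] = `[x' (tgt0 k), x' (tgt0 k).+1]) /\
    (forall i : 'I_kk, #|[pred k : 'I_r0 | tgt0 k == i]| = Nm i p).
  case: (Hs) => Es.
  - have [E1 E2] := Hp Es; apply: (gen false); rewrite ?Es // ?addn0 -?SjS //.
  - have [E1 E2] := Hn Es; apply: (gen true); rewrite ?Es ?oppr_lt0 // ?addn0 -?SjS //.
move=> neg Hsg E1 E2.
have [a' [A0 [Ar [Ainc Apc]]]] :=
  piece_sub (e := fun m => b (S t + m)) (ltW bl) He Hsg Hh E1 E2.
have [lo loE] : {lo : 'I_(r t) -> nat | forall m, lo m = if neg then (r t - m.+1)%N else m}.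
  by exists (fun m => if neg then (r t - m.+1)%N else m).
have lor : forall m, (lo m < r t)%N.
  by move=> m; rewrite loE; have := ltn_ord m; case: (neg); lia.
have lok : forall m, (S t + lo m < kk)%N.
  by move=> m; apply: leq_trans (SjS_le t); rewrite SjS ltn_add2l.
exists (r t), a', (fun m => insubd p (S t + lo m)%N).
split; first by rewrite A0 x'E // ltnW.
split; first by rewrite Ar x'E.
split; first exact: Ainc.
split.
  move=> m; have [Ha Him] := Apc m; exists s, c; split; first exact: Hs.
  split; first exact: Ha.
  rewrite Him val_insubd lok !x'E ?(ltnW (lok m)) ?(lok m) // -loE -addnS //.
move=> q; rewrite mxE colE // SjS.
have key : forall m : 'I_(r t), (insubd p (S t + lo m)%N == q) = (S t + lo m == q)%N.
  by move=> m; rewrite -val_eqE /= val_insubd lok.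
case: (boolP (S t <= q < S t + r t)%N) => Hq /=.
- have m0r : ((if neg then r t - (q - S t).+1 else q - S t) < r t)%N.
    by move: Hq; case: (neg); lia.
  rewrite -(card1 (Ordinal m0r)); apply: eq_card => m; rewrite !inE key -val_eqE /= loE.
  have := ltn_ord m; move: Hq; case: (neg) => Hq mr; apply/eqP/eqP; lia.
- apply: eq_card0 => m; rewrite !inE key; apply/negP => /eqP E.
  by move: Hq; rewrite -E leq_addr ltn_add2l lor.
Qed.

End Main.

Lemma choice3 (I T : Type) (B : nat -> Type) (P : forall (i : I) (r : nat), T -> B r -> Prop) :
  (forall i, exists r t (u : B r), P i r t u) ->
  exists (r : I -> nat) (t : I -> T) (u : forall i, B (r i)), forall i, P i (r i) (t i) (u i).
Proof.
move=> H.
exists (fun i => sval (cid (H i))).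
exists (fun i => sval (cid (svalP (cid (H i))))).
exists (fun i => sval (cid (svalP (cid (svalP (cid (H i))))))).
move=> i; exact: (svalP (cid (svalP (cid (svalP (cid (H i))))))).
Qed.

Local Open Scope complex_scope.
Lemma lam_pos (R : realType) m (A : 'M[nat]_m) (lam : R) :
  nonsingular A -> leading_eigenvalue A lam -> 0 < lam.
Proof.
move=> Hns [He Hb]; have l0 := eig_ne0 Hns He.
have H0 : 0 <= lam%:C by apply: le_trans (Hb _ He); exact: normr_ge0.
rewrite ler0c in H0; rewrite lt0r H0 andbT.
by apply/negP => /eqP l; move: l0; rewrite l rmorph0 eqxx.
Qed.
Local Close Scope complex_scope.

Local Close Scope classical_set_scope.
Local Close Scope ring_scope.

Theorem theorem2 (R : realType) (n : nat) (M : 'M[nat]_n) (h : R -> R) :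
  nonsingular M -> aperiodic M -> odd_block M -> realizes M h ->
  exists (k : nat) (N : 'M[nat]_k),
    aperiodic N /\ odd_block N /\ (forall i j : 'I_k, N i j <= 1)%N /\
    realizes N h /\
    (forall lam : R, leading_eigenvalue M lam -> leading_eigenvalue N lam).
Proof.
move=> Hns Hap _ [lam [v [Hlead [Hv [Hev [Hsum [Hcont [Hrange Hcol]]]]]]]].
have Hl := lam_pos Hns Hlead.
case: n M Hns Hap Hlead v Hv Hev Hsum Hcol => [|n] M Hns Hap Hlead v Hv Hev Hsum Hcol.
  by case: Hlead => /eigenvalueP [u _]; rewrite thinmx0 eqxx.
move: Hcol => /= Hcol.
have [r [a [tgt H3]]] := choice3 (B := fun r => 'I_r -> 'I_n.+1) Hcol.
have Ha0 j := (H3 j).1.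
have Har j := (H3 j).2.1.
have Hinc j := (H3 j).2.2.1.
have Hpc j := (H3 j).2.2.2.1.
have Hcnt j := (H3 j).2.2.2.2.
exists _, (Nm tgt).
split; first exact: (apN (M:=M) Hcnt Hap).
split; first exact: (obN (h:=h) (lam:=lam) (v:=v) (a:=a) Hv Hsum Ha0 Har Hinc Hl Hpc).
split; first by move=> i j; rewrite mxE; case: (_ == _).
split; first exact: (realN (M:=M) (h:=h) (lam:=lam) (v:=v) (a:=a) Hv Hsum Ha0 Har Hinc Hl Hpc Hcnt Hns Hlead Hcont Hrange).
move=> lam' HL; exact: (leadN (M:=M) Hcnt Hns HL).
Qed.
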